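(* Let $m,c$ be positive integers, and let $T_n$ denote the number of $(c,m)$-colored $B_n$-partitions. Let $\xi_n$ be the number of non-zero-blocks of a $(c,m)$-colored $B_n$-partition chosen uniformly at random. Then its expectation $E_n$ and variance $V_n$ satisfy \[ E_n=\frac{T_{n+1}}{mT_n}-\frac{1+c}{m},\qquad V_n=\frac{T_{n+2}}{m^2T_n}-\frac{T_{n+1}^2}{m^2T_n^2}-\frac1m . \]
   Context: Let $n,m,c$ be positive integers, let $C_1$ be a list of $c$ colors and $C_2$ a list of $m$ colors. A $(c,m)$-colored $B_n$-partition is a set partition $\pi$ of $[n]\cup\{0\}$ together with a coloring of the elements of $[n]$ defined as follows. For $x\in[n]\cup\{0\}$ let $b_x$ be the block of $\pi$ containing $x$. The block $b_0$ is called the zero-block, and every other block is a non-zero-block. Each $x\in[n]$ receives a color according to these rules: if $x=\min b_x$, then $x$ gets the first color of $C_2$; if $x\ne\min b_x$ and $x\in b_0$, then $x$ gets an arbitrary color from $C_1$; if $x\ne \min b_x$ and $x\notin b_0$, then $x$ gets an arbitrary color from $C_2$. Two such objects are equal exactly when they have the same underlying partition and the same coloring. *)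

(* Defs.v *)
From mathcomp Require Import all_boot all_order all_algebra.
Set Implicit Arguments. Unset Strict Implicit. Unset Printing Implicit Defensive.
Import GRing.Theory Num.Theory.
Local Open Scope ring_scope.

(* The ground set [n] ∪ {0} is 'I_n.+1 (element 0 is ord0).
   Colors: C1 = the c colors inl i (i : 'I_c), C2 = the m colors inr j
   (j : 'I_m); the first color of C2 is inr j with val j = 0. *)
Definition color (c m : nat) := ('I_c + 'I_m)%type.

Definition is_block_min n (P : {set {set 'I_n.+1}}) (x : 'I_n.+1) : bool :=
  [forall y in pblock P x, (x <= y)%N].

(* the coloring rules; applied to every x in 'I_n.+1.  For x = 0 (always the
   minimum of the zero-block) this fixes its (meaningless) color to the first
   color of C2, so that objects correspond bijectively to the paper's. *)
Definition color_ok c m n (P : {set {set 'I_n.+1}}) (x : 'I_n.+1) (k : color c m) : bool :=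
  if is_block_min P x then
    (match k with inr j => (val j == 0)%N | inl _ => false end)
  else if x \in pblock P ord0 then
    (match k with inl _ => true | inr _ => false end)
  else
    (match k with inl _ => false | inr _ => true end).

Definition is_cBP c m n
  (p : {set {set 'I_n.+1}} * {ffun 'I_n.+1 -> color c m}) : bool :=
  partition p.1 [set: 'I_n.+1] && [forall x, color_ok p.1 x (p.2 x)].

Definition cBP c m n := [set p | is_cBP (c:=c) (m:=m) (n:=n) p].

Definition T c m n : nat := #|cBP c m n|.

Definition xi c m n (p : {set {set 'I_n.+1}} * {ffun 'I_n.+1 -> color c m}) : nat :=
  #|[set B in p.1 | ord0 \notin B]|.

Definition E_n c m n : rat :=
  (\sum_(p in cBP c m n) (xi p)%:R) / (T c m n)%:R.

Definition V_n c m n : rat :=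
  (\sum_(p in cBP c m n) ((xi p)%:R - E_n c m n) ^+ 2) / (T c m n)%:R.

(* Main.v *)
Require Import Defs.
From mathcomp Require Import all_boot all_order all_algebra.
Import GRing.Theory Num.Theory.

Section Rep.
Variable n : nat.
Implicit Types (P : {set {set 'I_n.+1}}) (x y : 'I_n.+1).

Definition rep P x : 'I_n.+1 := [arg min_(y < x in pblock P x) (y : nat)].



Lemma repP P x : partition P [set: 'I_n.+1] ->
  rep P x \in pblock P x /\ forall y, y \in pblock P x -> (rep P x <= y)%N.
Proof.
move=> /and3P[/eqP cP tP _].
have xP : x \in pblock P x by rewrite mem_pblock cP inE.
rewrite /rep; case: arg_minnP => // r rin rmin; split => // y yin; exact: rmin.
Qed.

Lemma rep_uniq P x r : partition P [set: 'I_n.+1] -> r \in pblock P x ->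
  (forall y, y \in pblock P x -> (r <= y)%N) -> rep P x = r.
Proof.
move=> pP rin rmin; have [h1 h2] := repP P x pP.
apply/val_inj/eqP; rewrite eqn_leq h2 //= rmin //.
Qed.

Lemma rep_same P x y : partition P [set: 'I_n.+1] ->
  (y \in pblock P x) = (rep P x == rep P y).
Proof.
move=> pP; have /and3P[/eqP cP tP _] := pP.
have memP z : z \in pblock P z by rewrite mem_pblock cP inE.
apply/idP/eqP => [yx|e].
  have e := same_pblock tP yx.
  have [h1 h2] := repP P y pP.
  by apply: rep_uniq => //; rewrite -e.
have [h1 _] := repP P x pP; have [h3 _] := repP P y pP.
rewrite e in h1.
have e1 := same_pblock tP h1; have e2 := same_pblock tP h3.
by rewrite -e1 e2 memP.
Qed.

Lemma rep_le P x : partition P [set: 'I_n.+1] -> (rep P x <= x)%N.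
Proof.
move=> pP; have /and3P[/eqP cP _ _] := pP.
have [_ h] := repP P x pP; apply: h; by rewrite mem_pblock cP inE.
Qed.

Lemma rep_rep P x : partition P [set: 'I_n.+1] -> rep P (rep P x) = rep P x.
Proof.
move=> pP; have [h1 _] := repP P x pP.
by apply/esym/eqP; rewrite -rep_same.
Qed.

Lemma rep0 P : partition P [set: 'I_n.+1] -> rep P ord0 = ord0.
Proof. by move=> pP; apply/val_inj; have := rep_le P ord0 pP; rewrite /= leqn0 => /eqP. Qed.

Lemma is_block_minE P x : partition P [set: 'I_n.+1] -> is_block_min P x = (rep P x == x).
Proof.
move=> pP; have /and3P[/eqP cP _ _] := pP.
have xP : x \in pblock P x by rewrite mem_pblock cP inE.
have [h1 h2] := repP P x pP.
apply/forallP/eqP => [H|e].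
  apply: rep_uniq => // y yin; by have := H y; rewrite yin.
by move=> y; apply/implyP => yin; rewrite -{1}e h2.
Qed.

Lemma zeroE P x : partition P [set: 'I_n.+1] -> (x \in pblock P ord0) = (rep P x == ord0).
Proof. by move=> pP; rewrite rep_same // rep0 // eq_sym. Qed.

End Rep.
Arguments rep {n}. Arguments repP {n}. Arguments rep_uniq {n}. Arguments rep_same {n}. Arguments rep_le {n}. Arguments rep_rep {n}. Arguments rep0 {n}. Arguments is_block_minE {n}. Arguments zeroE {n}.

Section PartA.
Variables c m n : nat.
Local Notation G := {ffun 'I_n.+1 -> 'I_n.+1 * color c m}.
Local Notation PP := ({set {set 'I_n.+1}} * {ffun 'I_n.+1 -> color c m})%type.

Definition cok (r x : 'I_n.+1) (k : color c m) : bool :=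
  if r == x then (match k with inr j => (val j == 0)%N | inl _ => false end)
  else if r == ord0 then (match k with inl _ => true | inr _ => false end)
  else (match k with inl _ => false | inr _ => true end).

Definition gd (g : G) : bool :=
  [forall x, [&& (g (g x).1).1 == (g x).1, ((g x).1 <= x)%N & cok (g x).1 x (g x).2]].

Definition nb (g : G) : nat := #|[set r | (r != ord0) && ((g r).1 == r)]|.

Definition phi (p : PP) : G := [ffun x => (rep p.1 x, p.2 x)].
Definition Rg (g : G) := fun x y : 'I_n.+1 => (g x).1 == (g y).1.
Definition psi (g : G) : PP :=
  (equivalence_partition (Rg g) [set: 'I_n.+1], [ffun x => (g x).2]).

Lemma color_okE P x k : partition P [set: 'I_n.+1] ->
  color_ok P x k = cok (rep P x) x k.
Proof. by move=> pP; rewrite /color_ok /cok is_block_minE // zeroE. Qed.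

Lemma L1 p : p \in cBP c m n -> psi (phi p) = p.
Proof.
case: p => P col; rewrite inE => /andP[/= pP _].
rewrite /psi /phi /=; congr pair; last by apply/ffunP => x; rewrite !ffunE.
rewrite -[RHS](equivalence_partition_pblock pP).
rewrite /equivalence_partition; apply: eq_imset => x; apply/setP => y.
by rewrite !inE /Rg !ffunE /= rep_same.
Qed.

Lemma L3 p : p \in cBP c m n -> gd (phi p).
Proof.
case: p => P col; rewrite inE => /andP[/= pP /forallP cP].
apply/forallP => x; rewrite !ffunE /= rep_rep // eqxx rep_le //=.
by rewrite -color_okE.
Qed.

Lemma L4 p : p \in cBP c m n -> xi p = nb (phi p).
Proof.
case: p => P col; rewrite inE => /andP[/= pP _].
have /and3P[/eqP cP tP s0] := pP.
have memP z : z \in pblock P z by rewrite mem_pblock cP inE.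
rewrite /xi /nb /=.
rewrite -(@card_in_imset _ _ (pblock P) [set r | (r != ord0) && ((phi (P, col) r).1 == r)]).
  congr #|pred_of_set _|; apply/setP => B; rewrite inE. symmetry.
  apply/imsetP/andP => [[r] | [BP B0]].
    rewrite inE !ffunE /= => /andP[r0 /eqP rr] ->; split.
      by apply: pblock_mem; rewrite cP inE.
    by rewrite rep_same // rep0 // rr.
  have : B != set0 by apply: contraNneq s0 => <-.
  case/set0Pn => x xB.
  have eB := def_pblock tP BP xB.
  have [h1 _] := repP P x pP.
  exists (rep P x); last by rewrite -eB (same_pblock tP h1).
  rewrite inE !ffunE /= rep_rep // eqxx andbT.
  apply: contraNneq B0 => e; rewrite -eB rep_same // rep0 //.
  by rewrite e.
move=> r1 r2; rewrite !inE !ffunE /= => /andP[_ /eqP e1] /andP[_ /eqP e2] eb.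
have : r2 \in pblock P r1 by rewrite eb.
by rewrite rep_same // e1 e2 => /eqP.
Qed.

Lemma Rg_equiv g : {in [set: 'I_n.+1] & &, equivalence_rel (Rg g)}.
Proof.
move=> x y z _ _ _; rewrite /Rg eqxx; split => // /eqP ->; by [].
Qed.

Lemma L2 g : gd g -> (psi g \in cBP c m n) /\ phi (psi g) = g.
Proof.
move/forallP => gg.
have pP : partition (psi g).1 [set: 'I_n.+1] by apply: equivalence_partitionP; apply: Rg_equiv.
have rE x : rep (psi g).1 x = (g x).1.
  apply: rep_uniq => //.
    rewrite pblock_equivalence_partition ?inE //; last exact: Rg_equiv.
    by rewrite /Rg; case/and3P: (gg x) => /eqP ->.
  move=> y; rewrite pblock_equivalence_partition ?inE //; last exact: Rg_equiv.
  by rewrite /Rg => /eqP ->; case/and3P: (gg y).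
split.
  rewrite inE; apply/andP; split => //; apply/forallP => x.
  rewrite color_okE // rE /psi /= ffunE.
  by case/and3P: (gg x).
apply/ffunP => x; rewrite ffunE rE /psi /= ffunE; by case: (g x).
Qed.

Lemma partA (F : nat -> rat) :
  (\sum_(p in cBP c m n) F (xi p) = \sum_(g | gd g) F (nb g))%R.
Proof.
rewrite (reindex_onto psi phi L1).
apply: eq_big => g.
  apply/andP/idP => [[pin /eqP <-]|gg]; first exact: L3.
  by have [h1 h2] := L2 g gg; rewrite h1 h2.
case/andP => pin /eqP e; by rewrite L4 // e.
Qed.

End PartA.

Section PartB.
Variables c m n : nat.
Hypothesis hm : (0 < m)%N.
Local Notation G := {ffun 'I_n.+1 -> 'I_n.+1 * color c m}.
Local Notation G2 := {ffun 'I_n.+2 -> 'I_n.+2 * color c m}.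

Definition ext (a : G * ('I_n.+2 * color c m)) : G2 :=
  [ffun i => if unlift ord_max i is Some j then (lift ord_max (a.1 j).1, (a.1 j).2) else a.2].
Definition res (q : G2) : G * ('I_n.+2 * color c m) :=
  ([ffun j => (inord (q (lift ord_max j)).1 : 'I_n.+1, (q (lift ord_max j)).2)], q ord_max).

Lemma lift_val (r : 'I_n.+1) : val (lift ord_max r) = val r.
Proof. by rewrite /= /bump leqNgt ltn_ord. Qed.

Lemma res_ext a : res (ext a) = a.
Proof.
case: a => g b; rewrite /res /ext /=; congr pair; last by rewrite ffunE unlift_none.
apply/ffunP => j; rewrite !ffunE liftK /=.
rewrite (_ : inord _ = (g j).1); first by case: (g j).
by apply/val_inj; rewrite /= /bump leqNgt ltn_ord add0n inordK.
Qed.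

Lemma ext_res q : gd c m n.+1 q -> ext (res q) = q.
Proof.
move/forallP => gq; apply/ffunP => i; rewrite /ext /res !ffunE.
case: unliftP => [j ->|->] //=; rewrite ffunE /=.
rewrite (_ : lift ord_max _ = (q (lift ord_max j)).1) -?surjective_pairing //.
apply/val_inj; rewrite lift_val /= inordK //.
case/and3P: (gq (lift ord_max j)) => _ h _.
by apply: leq_ltn_trans h _; rewrite lift_val ltn_ord.
Qed.

Lemma forall_split (P : pred 'I_n.+2) :
  [forall i, P i] = P ord_max && [forall j, P (lift ord_max j)].
Proof.
apply/forallP/andP => [H|[h1 /forallP h2] i]; first by split => //; apply/forallP.
by case: (unliftP ord_max i) => [j ->|->].
Qed.

Lemma lift_eq (a b : 'I_n.+1) : (lift ord_max a == lift ord_max b) = (a == b).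
Proof. exact: (inj_eq (@lift_inj _ ord_max)). Qed.

Lemma cok_lift r x k : cok c m n.+1 (lift ord_max r) (lift ord_max x) k = cok c m n r x k.
Proof.
rewrite /cok lift_eq.
have -> : (lift ord_max r == ord0 :> 'I_n.+2) = (r == ord0).
  by apply/eqP/eqP => [/(congr1 val) | ->]; [rewrite lift_val => h; apply/val_inj | apply/val_inj; rewrite lift_val].
by [].
Qed.

Definition okx (g : G) (v : 'I_n.+2) (k : color c m) : bool :=
  cok c m n.+1 v ord_max k && (if unlift ord_max v is Some r then (g r).1 == r else true).

Lemma leq_liftE (a b : 'I_n.+1) : (lift ord_max a <= lift ord_max b)%N = (a <= b)%N.
Proof. by rewrite !lift_val. Qed.

Lemma gdE g v k : gd c m n.+1 (ext (g, (v, k))) = gd c m n g && okx g v k.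
Proof.
rewrite /gd forall_split.
set E := ext (g, (v, k)).
have e1 : E ord_max = (v, k) by rewrite /E ffunE unlift_none.
have e2 j : E (lift ord_max j) = (lift ord_max (g j).1, (g j).2) by rewrite /E ffunE liftK.
have Hl j : [&& (E (E (lift ord_max j)).1).1 == (E (lift ord_max j)).1,
     ((E (lift ord_max j)).1 <= lift ord_max j)%N & cok c m n.+1 (E (lift ord_max j)).1 (lift ord_max j) (E (lift ord_max j)).2]
   = [&& (g (g j).1).1 == (g j).1, ((g j).1 <= j)%N & cok c m n (g j).1 j (g j).2].
  rewrite e2 (e2 (g j).1).
  by rewrite (lift_eq (g (g j).1).1) leq_liftE cok_lift.
rewrite (eq_forallb Hl) -/(gd c m n g) e1 [(_, _).1]/= [(_, _).2]/=.
rewrite /okx leq_ord /=.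
case: unliftP => [r ->|ev].
  rewrite e2 (lift_eq (g r).1).
  by case: (gd c m n g); case: ((g r).1 == r); case: (cok _ _ _ _ _ _); rewrite ?andbF.
rewrite ev e1 /= ev eqxx andbT.
by case: (gd c m n g); case: (cok _ _ _ _ _ _).
Qed.

Lemma card_sum (T : finType) (b : pred T) : #|[set x | b x]| = (\sum_x (b x : nat))%N.
Proof.
rewrite -sum1_card big_mkcond /=; apply: eq_bigr => x _; rewrite inE; by case: (b x).
Qed.

Lemma nb_ext g v k : nb c m n.+1 (ext (g, (v, k))) = (nb c m n g + (v == ord_max))%N.
Proof.
rewrite /nb !card_sum big_ord_recr /=; congr addn.
  apply: eq_bigr => i _.
  rewrite (_ : widen_ord _ i = lift ord_max i); last by apply/val_inj; rewrite lift_val.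
  rewrite ffunE liftK /= lift_eq.
  rewrite (_ : (lift ord_max i == ord0 :> 'I_n.+2) = (i == ord0)) //.
  by apply/eqP/eqP => [/(congr1 val) | ->]; [rewrite lift_val => h; apply/val_inj | apply/val_inj; rewrite lift_val].
by rewrite ffunE unlift_none /=.
Qed.


Lemma sum_color (P : pred (color c m)) (F : color c m -> rat) :
  (\sum_(k | P k) F k = \sum_(i | P (inl i)) F (inl i) + \sum_(j | P (inr j)) F (inr j))%R.
Proof. exact: big_sumType. Qed.

Lemma liftN (i : 'I_n.+1) : (lift ord_max i == ord_max) = false.
Proof. by rewrite eq_sym (negbTE (neq_lift _ _)). Qed.

Lemma lift0N (i : 'I_n) : (lift ord0 i == ord0) = false.
Proof. by rewrite eq_sym (negbTE (neq_lift _ _)). Qed.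

Lemma inner (g : G) (X Y : rat) : gd c m n g ->
  (\sum_(a | okx g a.1 a.2) (if a.1 == ord_max then Y else X)
   = (c + m * nb c m n g)%:R * X + Y)%R.
Proof.
move=> gg.
transitivity (\sum_v \sum_(k | okx g v k) (if v == ord_max then Y else X))%R.
  by rewrite pair_big_dep.
rewrite big_ord_recr /=; congr (_ + _)%R; last first.
  rewrite /okx unlift_none sum_color /cok eqxx big_pred0 // add0r.
  rewrite (big_pred1 (Ordinal hm)) // => j /=.
  rewrite andbT; by apply/eqP/eqP => [h|->] //; apply/val_inj.
have wE (i : 'I_n.+1) : widen_ord (leqnSn n.+1) i = lift ord_max i by apply/val_inj; rewrite lift_val.
have l0 (i : 'I_n.+1) : (lift ord_max i == ord0 :> 'I_n.+2) = (i == ord0).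
  by apply/eqP/eqP => [/(congr1 val) | ->]; [rewrite lift_val => h; apply/val_inj | apply/val_inj; rewrite lift_val].
transitivity (\sum_(i < n.+1) (if (g i).1 == i then (if i == ord0 then c else m)%:R * X else 0))%R.
  apply: eq_bigr => i _; rewrite wE /okx liftK liftN.
  case: ((g i).1 =P i) => _; last by rewrite big_pred0 // => k; rewrite andbF.
  rewrite sum_color /cok liftN l0.
  case: (i == ord0).
    by rewrite [X in (_ + X)%R]big_pred0 // addr0 sumr_const card_ord mulr_natl.
  by rewrite big_pred0 // add0r sumr_const card_ord mulr_natl.
rewrite big_ord_recl /= (_ : (g ord0).1 == ord0); last first.
  apply/eqP/val_inj; move/forallP: gg => /(_ ord0) /and3P[_ h _].
  by apply/eqP; rewrite -leqn0.
rewrite /nb card_sum big_ord_recl /= add0n natrD mulrDl; congr (_ + _)%R.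
rewrite natrM natr_sum mulr_sumr mulr_suml; apply: eq_bigr => i _.
by case: ((g (lift ord0 i)).1 == lift ord0 i); rewrite ?mulr1 ?mulr0 ?mul0r.
Qed.

Lemma partB (F : nat -> rat) :
  (\sum_(q | gd c m n.+1 q) F (nb c m n.+1 q)
   = \sum_(g | gd c m n g) ((c + m * nb c m n g)%:R * F (nb c m n g) + F (nb c m n g).+1))%R.
Proof.
rewrite (reindex_onto ext res ext_res).
rewrite (eq_bigl (fun a => gd c m n a.1 && okx a.1 a.2.1 a.2.2)); last first.
  by case=> g [v k]; rewrite res_ext eqxx andbT gdE.
rewrite (eq_bigr (fun a => if a.2.1 == ord_max then F (nb c m n a.1).+1 else F (nb c m n a.1))); last first.
  by case=> g [v k] _; rewrite nb_ext /=; case: (v == ord_max); rewrite ?addn0 ?addn1.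
rewrite -(pair_big_dep (fun g => gd c m n g) (fun g b => okx g b.1 b.2)
   (fun g b => if b.1 == ord_max then F (nb c m n g).+1 else F (nb c m n g))) /=.
apply: eq_bigr => g gg; exact: inner.
Qed.

End PartB.

From mathcomp Require Import ring.

Local Open Scope ring_scope.

Lemma Tsum c m n : (T c m n)%:R = \sum_(g | gd c m n g) (1 : rat).
Proof.
by rewrite -(partA c m n (fun _ => 1)) sumr_const.
Qed.

Theorem theorem3 (c m n : nat) (hc : (0 < c)%N) (hm : (0 < m)%N) (hn : (0 < n)%N) :
  E_n c m n = (T c m n.+1)%:R / (m%:R * (T c m n)%:R) - (1 + c%:R) / m%:R /\
  V_n c m n = (T c m n.+2)%:R / (m%:R ^+ 2 * (T c m n)%:R)
              - (T c m n.+1)%:R ^+ 2 / (m%:R ^+ 2 * (T c m n)%:R ^+ 2)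
              - 1 / m%:R.
Proof.
set t0 := \sum_(g | gd c m n g) (1 : rat).
set s1 := \sum_(g | gd c m n g) ((nb c m n g)%:R : rat).
set s2 := \sum_(g | gd c m n g) ((nb c m n g)%:R ^+ 2 : rat).
set u1 := \sum_(g | gd c m n.+1 g) ((nb c m n.+1 g)%:R : rat).
have T0 : (T c m n)%:R = t0 by rewrite Tsum.
have T1 : (T c m n.+1)%:R = (c%:R + 1) * t0 + m%:R * s1.
  rewrite Tsum (partB c m n hm (fun _ => 1)) /t0 /s1 mulr_sumr mulr_sumr -big_split.
  by apply: eq_bigr => g _; rewrite /= natrD natrM; ring.
have T2 : (T c m n.+2)%:R = (c%:R + 1) * (T c m n.+1)%:R + m%:R * u1.
  rewrite Tsum (partB c m n.+1 hm (fun _ => 1)) Tsum /u1 mulr_sumr mulr_sumr -big_split.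
  by apply: eq_bigr => g _; rewrite /= natrD natrM; ring.
have U1 : u1 = (c%:R + 1) * s1 + m%:R * s2 + t0.
  rewrite /u1 (partB c m n hm (fun k => k%:R)) /s1 /s2 /t0 mulr_sumr mulr_sumr -!big_split.
  by apply: eq_bigr => g _; rewrite /= !natrD !natrM; ring.
have g0 : gd c m n [ffun x => (x, inr (Ordinal hm))].
  by apply/forallP => x; rewrite !ffunE /= eqxx leqnn /cok eqxx.
have Tpos : (0 < T c m n)%N.
  by apply/card_gt0P; exists (psi c m n [ffun x => (x, inr (Ordinal hm))]); case: (@L2 c m n _ g0).
have tn0 : t0 != 0 by rewrite -T0 pnatr_eq0 -lt0n.
have mn0 : m%:R != 0 :> rat by rewrite pnatr_eq0 -lt0n.
have EE : E_n c m n = s1 / t0.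
  by rewrite /E_n (partA c m n (fun k => k%:R)) T0.
split.
  by rewrite EE T1 T0; field; rewrite mn0 tn0.
rewrite /V_n (partA c m n (fun k => (k%:R - E_n c m n) ^+ 2)) EE T0 T2 U1 T1.
have -> : \sum_(g | gd c m n g) ((nb c m n g)%:R - s1 / t0) ^+ 2 =
          s2 - 2 * (s1 / t0) * s1 + (s1 / t0) ^+ 2 * t0.
  rewrite /s2 /s1 [in RHS]/t0 mulr_sumr mulr_sumr -sumrN -!big_split.
  by apply: eq_bigr => g _; rewrite /=; ring.
by field; rewrite mn0 tn0.
Qed.
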